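(* Let $X \subseteq \mathbb{P}^N$ be an irreducible, nondegenerate variety over an algebraically closed field of characteristic zero, with generic rank $g$ and maximal rank $m$. For $1 \leq k \leq g-1$, $\sigma_k(X) \not\subset W_{2g-k+1}$. In particular, if $m=2g$, then for $1 \leq k \leq g-1$, $\sigma_k(X) \not\subset W_{m-k+1}$.
   Context: For a nondegenerate variety $X\subseteq\mathbb{P}^N$, the rank of a point $p$ is the least $r$ such that $p$ lies in the linear span of some $r$ distinct points of $X$; $W_k$ is the Zariski closure of the set of points of rank exactly $k$ (empty if there are none); $g$ is the rank of a general point and $m$ the maximum rank. The $k$-th secant variety $\sigma_k(X)$ is the closure of the set of points of rank at most $k$. *)

(* Defs.v *)
From mathcomp Require Import all_boot all_algebra.
From mathcomp Require Import mpoly.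
Set Implicit Arguments. Unset Strict Implicit. Unset Printing Implicit Defensive.
Import GRing.Theory.
Local Open Scope ring_scope.

(* Projective space P^N over k is modelled by nonzero vectors of k^(N+1),
   i.e. functions 'I_(N.+1) -> k; a subset of P^N is a predicate on vectors
   (only its nonzero, scaling-invariant part matters). *)
Section ProjDefs.
Variable k : fieldType.
Variable N : nat.

Definition vec := 'I_N.+1 -> k.
Definition pset := vec -> Prop.

Definition nonzero (v : vec) : Prop := exists i, v i != 0.

Definition proj_eq (v w : vec) : Prop :=
  exists c : k, c != 0 /\ forall i, w i = c * v i.

Definition homogeneous (p : {mpoly k[N.+1]}) : Prop := exists d, p \is d.-homog.

Definition zero_locus (F : {mpoly k[N.+1]} -> Prop) : pset :=
  fun v => nonzero v /\ forall p, F p -> p.@[v] = 0.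

Definition zclosed (Z : pset) : Prop :=
  exists F : {mpoly k[N.+1]} -> Prop,
    (forall p, F p -> homogeneous p) /\ forall v, Z v <-> zero_locus F v.

Definition zclosure (S : pset) : pset :=
  zero_locus (fun p => homogeneous p /\ forall v, nonzero v -> S v -> p.@[v] = 0).

Definition psubset (A B : pset) : Prop := forall v, nonzero v -> A v -> B v.

Definition irreducible_var (X : pset) : Prop :=
  (exists v, nonzero v /\ X v) /\
  forall Z1 Z2 : pset, zclosed Z1 -> zclosed Z2 ->
    psubset X (fun v => Z1 v \/ Z2 v) -> psubset X Z1 \/ psubset X Z2.

Definition nondegenerate_var (X : pset) : Prop :=
  forall a : vec, (forall v, nonzero v -> X v -> \sum_i a i * v i = 0) ->
    forall i, a i = 0.

Definition in_span_distinct (X : pset) (p : vec) (r : nat) : Prop :=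
  exists xs : 'I_r -> vec,
    (forall j, nonzero (xs j) /\ X (xs j)) /\
    (forall j j', j != j' -> ~ proj_eq (xs j) (xs j')) /\
    exists c : 'I_r -> k, forall i, p i = \sum_j c j * xs j i.

Definition rank_eq (X : pset) (p : vec) (r : nat) : Prop :=
  nonzero p /\ in_span_distinct X p r /\
  forall r', (r' < r)%N -> ~ in_span_distinct X p r'.

Definition W (X : pset) (r : nat) : pset := zclosure (fun p => rank_eq X p r).

Definition sigma (X : pset) (r : nat) : pset :=
  zclosure (fun p => exists r', (r' <= r)%N /\ rank_eq X p r').

Definition generic_rank (X : pset) (g : nat) : Prop :=
  exists Z : pset, zclosed Z /\ (exists v, nonzero v /\ ~ Z v) /\
    forall p, nonzero p -> ~ Z p -> rank_eq X p g.

Definition max_rank (X : pset) (m : nat) : Prop :=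
  (exists p, rank_eq X p m) /\ forall p r, rank_eq X p r -> (r <= m)%N.

End ProjDefs.

(* Main.v *)
Require Import Defs.
From mathcomp Require Import all_boot all_algebra.
From mathcomp Require Import mpoly zify.
From Stdlib Require Import Classical FunctionalExtensionality.
Set Implicit Arguments. Unset Strict Implicit. Unset Printing Implicit Defensive.
Import GRing.Theory.
Local Open Scope ring_scope.
Lemma span_reduce (k : fieldType) (N : nat) (X : pset k N) (n : nat) :
  forall (ys : 'I_n -> vec k N) (c : 'I_n -> k) (p : vec k N),
  (forall j, nonzero (ys j) /\ X (ys j)) ->
  (forall i, p i = \sum_j c j * ys j i) ->
  exists r, (r <= n)%N /\ in_span_distinct X p r.
Proof.
elim: n => [|n IH] ys c p Hys Hp.
  exists 0%N; split => //; exists ys; split => //; split; first by case.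
  by exists c.
case: (classic (forall j j', j != j' -> ~ proj_eq (ys j) (ys j'))) => [Hd|Hnd].
  exists n.+1; split => //; exists ys; split => //; split => //; by exists c.
have [j [j' [Hne [c0 [_ Hc0]]]]] : exists j j', j != j' /\ proj_eq (ys j) (ys j').
  apply: NNPP => H; apply: Hnd => j j' Hne Hpe; apply: H; by exists j, j'.
case: (unliftP j' j) => [j1 Ej|Ej]; last by rewrite Ej eqxx in Hne.
have Hp' : forall i, p i = \sum_l (c (lift j' l) + (if l == j1 then c j' * c0 else 0)) * ys (lift j' l) i.
  move=> i; rewrite Hp (bigD1_ord j') //=.
  under [X in _ = X]eq_bigr => l _ do rewrite mulrDl.
  rewrite big_split /= addrC; congr (_ + _).
  rewrite (bigD1 j1) //= eqxx big1 => [|l /negbTE ->]; last by rewrite mul0r.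
  by rewrite addr0 Hc0 Ej mulrA.
have [r [Hr Hs]] := IH _ _ p (fun l => Hys (lift j' l)) Hp'.
by exists r; split => //; apply: leqW.
Qed.

Lemma span_union (k : fieldType) (N : nat) (X : pset k N) (a b : nat)
  (ys : 'I_a -> vec k N) (zs : 'I_b -> vec k N) (cy : 'I_a -> k) (cz : 'I_b -> k)
  (p : vec k N) :
  (forall j, nonzero (ys j) /\ X (ys j)) ->
  (forall j, nonzero (zs j) /\ X (zs j)) ->
  (forall i, p i = \sum_j cy j * ys j i + \sum_j cz j * zs j i) ->
  exists r, (r <= a + b)%N /\ in_span_distinct X p r.
Proof.
move=> Hy Hz Hp.
have sl : forall l, split (lshift b l) = inl l := fun l => unsplitK (inl l).
have sr : forall l, split (rshift a l) = inr l := fun l => unsplitK (inr l).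
apply: (@span_reduce k N X (a + b)
  (fun l => match split l with inl l => ys l | inr l => zs l end)
  (fun l => match split l with inl l => cy l | inr l => cz l end)).
  by move=> l; case: (split l).
move=> i; rewrite Hp big_split_ord /=.
by congr (_ + _); apply: eq_bigr => l _; rewrite ?sl ?sr.
Qed.

Lemma min_rank (k : fieldType) (N : nat) (X : pset k N) (p : vec k N) (n : nat) :
  nonzero p -> in_span_distinct X p n -> exists r, (r <= n)%N /\ rank_eq X p r.
Proof.
move=> nz; elim/ltn_ind: n => n IH Hs.
case: (classic (exists r', (r' < n)%N /\ in_span_distinct X p r')) => [[r' [lt Hr']]|Hno].
  have [r [Hr Hrk]] := IH r' lt Hr'.
  by exists r; split => //; apply: leq_trans Hr (ltnW lt).
exists n; split => //; split => //; split => // r' lt H; apply: Hno; by exists r'.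
Qed.

Lemma comp_homog (k : fieldType) (n : nat) (d : nat) (f : {mpoly k[n]})
  (lq : n.-tuple {mpoly k[n]}) :
  f \is d.-homog -> (forall i, tnth lq i \is 1%N.-homog) -> f \mPo lq \is d.-homog.
Proof.
move=> Hf Hl; rewrite comp_mpolyE big_seq.
apply: (big_ind (fun q => q \is d.-homog)); first exact: dhomog0.
  by move=> q1 q2; apply: dhomogD.
move=> m Hm; apply: dhomogZ.
have -> : d = (\sum_(i < n) m i)%N.
  rewrite -mdegE; have := dhomog_mf Hf Hm; by [].
apply: (big_rec2 (fun e q => q \is e.-homog)); first exact: dhomog1.
move=> i e q _ Hq; apply: dhomogM => //.
by have := dhomogMn (m i) (Hl i); rewrite mul1n.
Qed.

Theorem corollary3p4 (k : closedFieldType) (N : nat) (X : pset k N) (g m : nat) :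
  [pchar k] =i pred0 ->
  zclosed X -> irreducible_var X -> nondegenerate_var X ->
  generic_rank X g -> max_rank X m ->
  (forall j : nat, (1 <= j <= g - 1)%N ->
     ~ psubset (sigma X j) (W X (2 * g - j + 1))) /\
  (m = (2 * g)%N -> forall j : nat, (1 <= j <= g - 1)%N ->
     ~ psubset (sigma X j) (W X (m - j + 1))).
Proof.
move=> _ _ _ _ [Z [[F [HFh HZ]] [[u [nzu nZu]] HU]]] _.
have key : forall j, (1 <= j <= g - 1)%N -> ~ psubset (sigma X j) (W X (2 * g - j + 1)).
  move=> j /andP [j1 jg] Hsub.
  have Hu := HU u nzu nZu.
  have Hu0 := Hu.
  have eg : g = (j + (g - j))%N by lia.
  rewrite eg in Hu.
  case: Hu => _ [[xs [Hxs [_ [c Hc]]]] _].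
  pose x : vec k N := fun i => \sum_(l < j) c (lshift _ l) * xs (lshift _ l) i.
  pose w : vec k N := fun i => \sum_(l < g - j) c (rshift j l) * xs (rshift j l) i.
  have Huxw : forall i, u i = x i + w i by move=> i; rewrite Hc big_split_ord.
  have Hw : forall (q : vec k N) (t : k), (forall i, q i = t * w i) ->
      exists r, (r <= g - j)%N /\ in_span_distinct X q r.
    move=> q t Hq; apply: (@span_reduce k N X (g - j) (fun l => xs (rshift j l))
        (fun l => t * c (rshift j l))).
      by move=> l; apply: Hxs.
    by move=> i; rewrite Hq /w mulr_sumr; apply: eq_bigr => l _; rewrite mulrA.
  have nzx : nonzero x.
    apply: NNPP => Hn.
    have Hx0 : forall i, x i = 0.
      by move=> i; apply: NNPP => H; apply: Hn; exists i; apply/eqP.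
    have Hu1 : forall i, u i = 1 * w i by move=> i; rewrite Huxw Hx0 add0r mul1r.
    have [r [Hr Hs]] := Hw u 1 Hu1.
    case: Hu0 => _ [_ Hmin]; apply: (Hmin r) => //; lia.
  have sx : sigma X j x.
    have [r0 [Hr0 Hs0]] := @span_reduce k N X j (fun l => xs (lshift _ l))
       (fun l => c (lshift _ l)) x (fun l => Hxs _) (fun i => erefl).
    have [r [Hr Hrk]] := min_rank nzx Hs0.
    split => // q [_ Hq]; apply: Hq => //; exists r; split => //; lia.
  have [f [Ff fu]] : exists f, F f /\ f.@[u] != 0.
    apply: NNPP => H; apply: nZu; apply/HZ; split => // f Ff.
    apply: NNPP => Hne; apply: H; exists f; split => //; exact/eqP.
  have [d Hd] := HFh f Ff.
  have [i0 xi0] := nzx.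
  pose lq := [tuple ('X_i + ((x i0)^-1 * w i) *: 'X_i0) | i < N.+1].
  pose h := f \mPo lq.
  have hE : forall v, h.@[v] = f.@[fun i => v i + (x i0)^-1 * v i0 * w i].
    move=> v; rewrite comp_mpoly_meval; apply: meval_eq => i.
    by rewrite tnth_mktuple mevalD mevalZ !mevalXU mulrAC.
  have hh : homogeneous h.
    exists d; apply: comp_homog => // i; rewrite tnth_mktuple; apply: dhomogD.
      by rewrite dhomogX /= mdeg1.
    by apply: dhomogZ; rewrite dhomogX /= mdeg1.
  case: (Hsub x nzx sx) => _ HW.
  have := HW h; rewrite hE => H. move/eqP: fu; apply; rewrite -H.
    by apply: meval_eq => i /=; rewrite mulVf // mul1r Huxw.
  split => // v nzv Hv; rewrite hE.
  set t := (x i0)^-1 * v i0.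
  case: Hv => _ [_ Hvmin].
  case: (classic (nonzero (fun i => v i + t * w i))) => nzq.
    case: (classic (Z (fun i => v i + t * w i))) => Zq.
      have [_ Hq] := (HZ _).1 Zq; exact: Hq f Ff.
    have [_ [[ys [Hys [_ [e He]]]] _]] := HU _ nzq Zq.
    have Hv' : forall i, v i = \sum_l e l * ys l i + \sum_l (- t * c (rshift j l)) * xs (rshift j l) i.
      move=> i; rewrite -He /w mulr_sumr -addrA -big_split /=.
      rewrite (eq_bigr (fun _ => 0)) ?big1_eq ?addr0 // => l _.
      by rewrite !mulNr -mulrA addrN.
    have [r [Hr Hs]] := @span_union k N X g (g - j) ys (fun l => xs (rshift j l)) e
       (fun l => - t * c (rshift j l)) v Hys (fun l => Hxs _) Hv'.
    by exfalso; apply: (Hvmin r) Hs; lia.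
  have Hq0 : forall i, v i = - t * w i.
    move=> i; apply/eqP; rewrite mulNr -subr_eq0 opprK; apply/eqP.
    by apply: NNPP => Hn0; apply: nzq; exists i; apply/eqP.
  have [r [Hr Hs]] := Hw v (- t) Hq0.
  by exfalso; apply: (Hvmin r) Hs; lia.
split; first exact: key.
by move=> -> j Hj; apply: key.
Qed.
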